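(* Let $p$ be a prime and $(a,b,c)$ a primitive positive definite form of discriminant $\Delta<0$. Then $$P_{p,0}(a,b,c,q)=\begin{cases}(a,bp,cp^2,q), & p\mid a,\ \left(\frac{\Delta}{p}\right)=0,\\ f_1(q), & p\nmid a,\ \left(\frac{\Delta}{p}\right)=0,\\ (a,b,c,q^{p^2}), & \left(\frac{\Delta}{p}\right)=-1,\\ f_2(q)+(a,pb,cp^2,q)-(a,b,c,q^{p^2}), & p\mid a,\ \left(\frac{\Delta}{p}\right)=1,\\ f_3(q)+f_4(q)-(a,b,c,q^{p^2}), & p\nmid a,\ \left(\frac{\Delta}{p}\right)=1,\end{cases}$$ where $f_i(q):=(ap^2,\,p(b+2ah_i),\,ah_i^2+bh_i+c,\,q)$ and $0\le h_i<p$ are: for $p$ odd, $h_1\equiv -b/(2a)$, $h_2\equiv -c/b$, $h_3\equiv(-b+\sqrt{\Delta})/(2a)$, $h_4\equiv(-b-\sqrt{\Delta})/(2a)\pmod p$ ($\sqrt\Delta$ a fixed square root of $\Delta$ mod $p$); for $p=2$, $h_1\equiv h_2\equiv h_3\equiv c\pmod 2$ and $h_4\not\equiv h_3\pmod 2$.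
   Context: For integers $A,B,C$ with $A>0$, $B^2-4AC<0$, the theta series is the formal power series $(A,B,C,q):=\sum_{(x,y)\in\mathbb Z^2}q^{Ax^2+Bxy+Cy^2}=\sum_{n\ge0}(A,B,C;n)q^n$, where $(A,B,C;n)$ is the number of representations of $n$ by $Ax^2+Bxy+Cy^2$; $(A,B,C,q^{k})$ denotes this series with $q$ replaced by $q^k$. For $m\ge1$ and $0\le r<m$, the projection operator is $P_{m,r}\sum_{n\ge0}a(n)q^n=\sum_{n\ge0}a(mn+r)q^{mn+r}$. $\left(\frac{\Delta}{p}\right)$ is the Kronecker symbol. *)

(* Defs.v *)
From HB Require Import structures.
From mathcomp Require Import all_boot all_order all_algebra.
Set Implicit Arguments. Unset Strict Implicit. Unset Printing Implicit Defensive.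
Import Order.TTheory GRing.Theory Num.Theory.
Local Open Scope ring_scope.

Definition qform (A B C x y : int) : int := A * x ^+ 2 + B * x * y + C * y ^+ 2.

(* Search radius: for a positive definite form, any (x,y) with Q(x,y) = n
   satisfies |x| <= 4 C n and |y| <= 4 A n, hence lies in the box below. *)
Definition rep_bound (A C : int) (n : nat) : nat := (4 * (`|A| + `|C|) * n)%N.

Definition box (N : nat) : seq int := [seq (i%:Z - N%:Z) | i <- iota 0 (2 * N).+1].

(* (A,B,C;n): the number of (x,y) in Z^2 with A x^2 + B x y + C y^2 = n
   (for positive definite forms; all representations lie in the box). *)
Definition rep (A B C : int) (n : nat) : nat :=
  let N := rep_bound A C n in
  (\sum_(x <- box N) \sum_(y <- box N) (qform A B C x y == n%:Z))%N.

(* Formal power series with integer coefficients, as coefficient functions. *)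
Definition theta (A B C : int) : nat -> int := fun n => (rep A B C n)%:Z.

Definition theta_pow (k : nat) (A B C : int) : nat -> int :=
  fun n => if (k %| n)%N then (rep A B C (n %/ k))%:Z else 0.

Definition proj (m r : nat) (f : nat -> int) : nat -> int :=
  fun n => if (n %% m == r)%N then f n else 0.

Definition kron (D : int) (p : nat) : int :=
  if p == 2%N then
    (if (2 %| D)%Z then 0
     else if ((D %% 8)%Z == 1) || ((D %% 8)%Z == 7) then 1 else -1)
  else if (p%:Z %| D)%Z then 0
  else if [exists x : 'I_p, (p%:Z %| (x%:Z) ^+ 2 - D)%Z] then 1 else -1.

Definition primitive_form (A B C : int) : Prop := gcdz (gcdz A B) C = 1.

Definition disc (A B C : int) : int := B ^+ 2 - 4 * A * C.

Definition ftheta (p : nat) (a b c : int) (h : nat) : nat -> int :=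
  theta (a * (p%:Z) ^+ 2) (p%:Z * (b + 2 * a * h%:Z))
        (a * (h%:Z) ^+ 2 + b * h%:Z + c).

Definition congz (p : nat) (x y : int) : Prop := (p%:Z %| x - y)%Z.

(* Conditions defining h_1, ..., h_4 (with 0 <= h < p imposed separately). *)
Definition hcond1 (p : nat) (a b c : int) (h : nat) : Prop :=
  if p == 2%N then congz 2 h%:Z c else congz p (2 * a * h%:Z) (- b).
Definition hcond2 (p : nat) (a b c : int) (h : nat) : Prop :=
  if p == 2%N then congz 2 h%:Z c else congz p (b * h%:Z) (- c).
(* s is the fixed square root of the discriminant mod p (used for p odd) *)
Definition hcond3 (p : nat) (a b c s : int) (h : nat) : Prop :=
  if p == 2%N then congz 2 h%:Z c else congz p (2 * a * h%:Z) (- b + s).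
Definition hcond4 (p : nat) (a b c s : int) (h3 h : nat) : Prop :=
  if p == 2%N then ~ congz 2 h%:Z h3%:Z else congz p (2 * a * h%:Z) (- b - s).

(* Main.v *)
Require Import Defs.
From HB Require Import structures.
From mathcomp Require Import all_boot all_order all_algebra zify ring.
Import Order.TTheory GRing.Theory Num.Theory.
Local Open Scope ring_scope.

Definition pbox (N : nat) : seq (int * int) := [seq (x, y) | x <- box N, y <- box N].

Lemma mem_box (N : nat) (x : int) : (x \in box N) = (`|x| <= N%:Z).
Proof.
apply/idP/idP.
  case/mapP => i; rewrite mem_iota add0n => Hi ->. lia.
move=> Hx; apply/mapP; exists (absz (x + N%:Z)).
  rewrite mem_iota add0n. lia.
lia.
Qed.

Lemma uniq_box N : uniq (box N).
Proof.
rewrite map_inj_uniq ?iota_uniq // => i j /= H. lia.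
Qed.

Lemma uniq_pbox N : uniq (pbox N).
Proof.
apply: allpairs_uniq; try exact: uniq_box.
by move=> [x y] [x' y'] _ _ /=.
Qed.

Lemma mem_pbox N (w : int * int) : (w \in pbox N) = (`|w.1| <= N%:Z) && (`|w.2| <= N%:Z).
Proof.
apply/allpairsP/andP.
  by case=> [[x y]] [/= Hx Hy ->]; rewrite -!mem_box.
by case=> Hx Hy; exists w; rewrite !mem_box; case: w Hx Hy.
Qed.

Definition Qp (A B C : int) (n : nat) : pred (int * int) :=
  fun w => qform A B C w.1 w.2 == n%:Z.

Lemma repE A B C n : rep A B C n = count (Qp A B C n) (pbox (rep_bound A C n)).
Proof.
have -> : rep A B C n = (\sum_(x <- box (rep_bound A C n)) \sum_(y <- box (rep_bound A C n))
   (qform A B C x y == n%:Z))%N by [].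
symmetry; rewrite -sum1_count big_mkcond /pbox.
etransitivity. exact: big_allpairs.
apply: eq_bigr => x _; apply: eq_bigr => y _. by rewrite /Qp /=; case: (_ == _).
Qed.

Lemma qbound A B C x y (n : nat) : 0 < A -> disc A B C < 0 ->
  qform A B C x y = n%:Z -> (`|x| <= (rep_bound A C n)%:Z) && (`|y| <= (rep_bound A C n)%:Z).
Proof.
rewrite /disc /qform /rep_bound => HA HD HQ.
have HB : 0 <= B ^+ 2 by apply: sqr_ge0.
have HAC : 0 < A * C by move: HD HB; clear; lia.
have HC : 0 < C by move: HAC HA; clear; nia.
have e1 : 4 * A * n%:Z = (2 * A * x + B * y) ^+ 2 + (4 * A * C - B ^+ 2) * y ^+ 2.
  rewrite -HQ; ring.
have e2 : 4 * C * n%:Z = (2 * C * y + B * x) ^+ 2 + (4 * A * C - B ^+ 2) * x ^+ 2.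
  rewrite -HQ; ring.
have hx : `|x| <= x ^+ 2 by rewrite expr2; clear; nia.
have hy : `|y| <= y ^+ 2 by rewrite expr2; clear; nia.
have s1 : 0 <= (2 * A * x + B * y) ^+ 2 by apply: sqr_ge0.
have s2 : 0 <= (2 * C * y + B * x) ^+ 2 by apply: sqr_ge0.
have hd : 1 <= 4 * A * C - B ^+ 2 by move: HD; clear; lia.
have t1 : y ^+ 2 <= 4 * A * n%:Z.
  rewrite e1; have : y ^+ 2 <= (4 * A * C - B ^+ 2) * y ^+ 2.
    by rewrite -{1}(mul1r (_ ^+ 2)); apply: ler_wpM2r; [exact: sqr_ge0|].
  move: s1; clear; lia.
have t2 : x ^+ 2 <= 4 * C * n%:Z.
  rewrite e2; have : x ^+ 2 <= (4 * A * C - B ^+ 2) * x ^+ 2.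
    by rewrite -{1}(mul1r (_ ^+ 2)); apply: ler_wpM2r; [exact: sqr_ge0|].
  move: s2; clear; lia.
have hAn : 0 <= A * n%:Z by apply: mulr_ge0; [exact: ltW|].
have hCn : 0 <= C * n%:Z by apply: mulr_ge0; [exact: ltW|].
rewrite !PoszM PoszD (gez0_abs (ltW HA)) (gez0_abs (ltW HC)).
apply/andP; split.
  move: hx t2 hAn hCn; clear; lia.
move: hy t1 hAn hCn; clear; lia.
Qed.

Lemma count_bij (P1 P2 : pred (int * int)) (s1 s2 : seq (int * int)) (f : int * int -> int * int) :
  uniq s1 -> uniq s2 -> injective f ->
  (forall z, P1 z -> P2 (f z)) -> (forall w, P2 w -> exists z, P1 z /\ f z = w) ->
  (forall z, P1 z -> z \in s1) -> (forall w, P2 w -> w \in s2) ->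
  count P1 s1 = count P2 s2.
Proof.
move=> u1 u2 fi H1 H2 m1 m2.
rewrite -!size_filter -(size_map f).
apply: perm_size; apply: uniq_perm.
- by rewrite map_inj_uniq // filter_uniq.
- by rewrite filter_uniq.
move=> w; apply/mapP/idP.
  by case=> z; rewrite mem_filter => /andP [Pz _] ->; rewrite mem_filter H1 // m2 // H1.
rewrite mem_filter => /andP [Pw _]; case: (H2 w Pw) => z [Pz <-].
by exists z => //; rewrite mem_filter Pz m1.
Qed.

Lemma rep_bij (A B C A1 B1 C1 : int) (n m : nat) (R : pred (int * int)) (f : int * int -> int * int) :
  0 < A -> disc A B C < 0 -> 0 < A1 -> disc A1 B1 C1 < 0 -> injective f ->
  (forall z, qform A1 B1 C1 z.1 z.2 = m%:Z -> R (f z) /\ qform A B C (f z).1 (f z).2 = n%:Z) ->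
  (forall w, qform A B C w.1 w.2 = n%:Z -> R w -> exists z, f z = w /\ qform A1 B1 C1 z.1 z.2 = m%:Z) ->
  count [pred w | Qp A B C n w && R w] (pbox (rep_bound A C n)) = rep A1 B1 C1 m.
Proof.
move=> HA HD HA1 HD1 fi H1 H2.
rewrite repE; symmetry; apply: (@count_bij _ _ _ _ f) => //; try exact: uniq_pbox.
- by move=> z /eqP /H1 [Rz Qz]; rewrite /= /Qp Qz eqxx.
- move=> w /andP [/eqP Qw Rw]; case: (H2 w Qw Rw) => z [fz Qz].
  by exists z; split => //; apply/eqP.
- by move=> [x y] /eqP Q; rewrite mem_pbox; apply: qbound Q.
by move=> [x y] /andP [/eqP Q _]; rewrite mem_pbox; apply: qbound Q.
Qed.

Definition QF {F : fieldType} (A B C X Y : F) := A * X ^+ 2 + B * X * Y + C * Y ^+ 2.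

Lemma keyid (F : fieldType) (A B C X Y : F) :
  4 * A * QF A B C X Y = (2 * A * X + B * Y) ^+ 2 - (B ^+ 2 - 4 * A * C) * Y ^+ 2.
Proof. rewrite /QF; ring. Qed.

Lemma c1F (F : fieldType) (A B C X Y : F) : A = 0 -> B ^+ 2 - 4 * A * C = 0 -> C != 0 ->
  (QF A B C X Y == 0) = (Y == 0).
Proof.
move=> -> HD HC.
have : B ^+ 2 = 0 by rewrite -HD; ring.
move/eqP; rewrite expf_eq0 /= => /eqP B0.
by rewrite /QF B0 !mul0r !add0r mulf_eq0 (negbTE HC) /= expf_eq0.
Qed.

Lemma c2F (F : fieldType) (A B C H X Y : F) : (2 : F) != 0 -> A != 0 ->
  B ^+ 2 - 4 * A * C = 0 -> 2 * A * H = - B ->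
  (QF A B C X Y == 0) = (X - H * Y == 0).
Proof.
move=> h2 hA HD HH.
have e : 4 * A * QF A B C X Y = (2 * A) ^+ 2 * (X - H * Y) ^+ 2.
  rewrite keyid HD -[B]opprK -HH; ring.
have h4A : 4 * A != 0.
  by rewrite mulf_neq0 // (_ : 4 = 2 * 2 :> F) ?mulf_neq0 //; ring.
apply/idP/idP => /eqP H0.
  by move: e; rewrite H0 mulr0 => /esym/eqP; rewrite mulf_eq0 !expf_eq0 /= mulf_eq0 (negbTE h2) (negbTE hA).
apply/eqP; apply: (mulfI h4A); rewrite e H0; ring.
Qed.

Lemma c3F (F : fieldType) (A B C X Y : F) : (2 : F) != 0 ->
  (forall Z : F, Z ^+ 2 != B ^+ 2 - 4 * A * C) ->
  (QF A B C X Y == 0) = (X == 0) && (Y == 0).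
Proof.
move=> h2 hsq.
have hA : A != 0.
  apply/eqP => A0; move: (hsq B); rewrite A0 mulr0 mul0r subr0 eqxx //.
have h4A : 4 * A != 0.
  by rewrite mulf_neq0 // (_ : 4 = 2 * 2 :> F) ?mulf_neq0 //; ring.
apply/idP/idP; last first.
  by case/andP => /eqP -> /eqP ->; rewrite /QF; apply/eqP; ring.
move=> /eqP H0.
have e := @keyid F A B C X Y. rewrite H0 mulr0 in e. symmetry in e.
have hY : Y = 0.
  apply/eqP; apply: contraT => hY; move: (hsq ((2 * A * X + B * Y) / Y)).
  move/eqP: e; rewrite subr_eq0 => /eqP e.
  by rewrite expr_div_n e mulfK ?eqxx // expf_neq0.
have : (2 * A * X) ^+ 2 = 0 by rewrite -e hY; ring.
move/eqP; rewrite expf_eq0 /= !mulf_eq0 (negbTE h2) (negbTE hA) /= => ->.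
by rewrite hY eqxx.
Qed.

Lemma c4F (F : fieldType) (A B C H X Y : F) : A = 0 -> B != 0 -> B * H = - C ->
  (QF A B C X Y == 0) = (Y == 0) || (X - H * Y == 0).
Proof.
move=> A0 hB HH.
have e : QF A B C X Y = B * Y * (X - H * Y).
  by rewrite /QF A0 -[C]opprK -HH; ring.
by rewrite e !mulf_eq0 (negbTE hB).
Qed.

Lemma c4Fi (F : fieldType) (H X Y : F) :
  (Y == 0) && (X - H * Y == 0) = (X == 0) && (Y == 0).
Proof.
case: (eqVneq Y 0) => [->|]; last by rewrite !andbF.
by rewrite mulr0 subr0 andbC.
Qed.

Lemma c5F (F : fieldType) (A B C S H3 H4 X Y : F) : (2 : F) != 0 -> A != 0 ->
  S ^+ 2 = B ^+ 2 - 4 * A * C -> 2 * A * H3 = - B + S -> 2 * A * H4 = - B - S ->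
  (QF A B C X Y == 0) = (X - H3 * Y == 0) || (X - H4 * Y == 0).
Proof.
move=> h2 hA HS e3 e4.
have e : 4 * A * QF A B C X Y = (2 * A) ^+ 2 * ((X - H3 * Y) * (X - H4 * Y)).
  have -> : (2 * A) ^+ 2 * ((X - H3 * Y) * (X - H4 * Y)) =
     (2 * A * X - (2 * A * H3) * Y) * (2 * A * X - (2 * A * H4) * Y) by ring.
  by rewrite keyid -HS e3 e4; ring.
have h4A : 4 * A != 0.
  by rewrite mulf_neq0 // (_ : 4 = 2 * 2 :> F) ?mulf_neq0 //; ring.
rewrite -(mulrI_eq0 _ (mulfI h4A)) e mulf_eq0 expf_eq0 /= mulf_eq0 (negbTE h2) (negbTE hA) /=.
by rewrite mulf_eq0.
Qed.

Lemma c5Fi (F : fieldType) (A B C S H3 H4 X Y : F) : (2 : F) != 0 -> A != 0 -> S != 0 ->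
  2 * A * H3 = - B + S -> 2 * A * H4 = - B - S ->
  (X - H3 * Y == 0) && (X - H4 * Y == 0) = (X == 0) && (Y == 0).
Proof.
move=> h2 hA hS e3 e4.
apply/idP/idP; last by case/andP => /eqP -> /eqP ->; rewrite !mulr0 !subr0 eqxx.
case/andP => /eqP a /eqP b.
have hX3 : X = H3 * Y by apply/eqP; rewrite -subr_eq0 a.
have hX4 : X = H4 * Y by apply/eqP; rewrite -subr_eq0 b.
have hd : (H3 - H4) * Y = 0 by rewrite mulrBl -hX3 -hX4 subrr.
have hn : H3 - H4 != 0.
  apply: contraNneq (mulf_neq0 h2 hS) => hz.
  have -> : 2 * S = 2 * A * (H3 - H4) by rewrite mulrBr e3 e4; ring.
  by rewrite hz mulr0.
move/eqP: hd; rewrite mulf_eq0 (negbTE hn) /= => /eqP hY.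
by rewrite hX3 hY mulr0 eqxx.
Qed.

Set Implicit Arguments. Unset Strict Implicit.

Lemma dvdF (p : nat) (z : int) : prime p -> (p%:Z %| z)%Z = ((z%:~R : 'F_p) == 0).
Proof.
move=> pp; have ch := pchar_Fp pp.
case: z => n.
  exact: (dvdn_pcharf ch n).
change ((p %| n.+1)%N = (- (n.+1)%:R == 0 :> 'F_p)).
by rewrite oppr_eq0 (dvdn_pcharf ch).
Qed.

Lemma qformF (F : fieldType) (A B C x y : int) :
  ((qform A B C x y)%:~R : F) = QF A%:~R B%:~R C%:~R x%:~R y%:~R.
Proof. by rewrite /qform /QF !(intrD, intrM, rmorphXn). Qed.

Lemma F2c (x : 'F_2) : x = 0 \/ x = 1.
Proof. case: x => [[|[|k]] Hk]; [left|right|by []]; exact: val_inj. Qed.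

Lemma F2ne0 (x : 'F_2) : x != 0 -> x = 1.
Proof. by case: (F2c x) => ->. Qed.

Lemma kronP0 (D : int) (p : nat) : (p%:Z %| D)%Z -> kron D p = 0.
Proof. move=> H; rewrite /kron; case: eqP => [e|_]; last by rewrite H. by subst; rewrite H. Qed.

Lemma kron0 (D : int) (p : nat) : kron D p = 0 -> (p%:Z %| D)%Z.
Proof.
rewrite /kron; case: eqP => [->|_]; case: ifP => // _.
  by case: ifP.
by case: ifP.
Qed.

Lemma kron2 (D : int) : kron D 2 = (if (2 %| D)%Z then 0
     else if ((D %% 8)%Z == 1) || ((D %% 8)%Z == 7) then 1 else -1).
Proof. by []. Qed.

Lemma kronodd (D : int) (p : nat) : prime p -> p != 2%N -> kron D p = -1 ->
  forall Z : 'F_p, Z ^+ 2 != D%:~R.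
Proof.
move=> pp p2; rewrite /kron (negbTE p2); case: ifP => // _.
case: ifP => // /negbT /existsP hn _ Z; apply/negP => /eqP hZ; apply: hn.
have lt0 : forall m, (m < (Zp_trunc (pdiv p)).+2)%N -> (m < p)%N by move=> m; rewrite Fp_cast.
have lt := lt0 _ (ltn_ord Z).
exists (Ordinal lt); rewrite dvdF //= rmorphB /= rmorphXn /= -hZ.
have -> : ((val Z)%:Z%:~R : 'F_p) = Z.
  rewrite -[in RHS](natr_Zp Z); by [].
by rewrite subrr.
Qed.

Unset Implicit Arguments.

Lemma par (z : int) : (exists k, z = 2 * k) \/ (exists k, z = 2 * k + 1).
Proof.
case: (boolP (2 %| z)%Z) => h; [left|right]; exists (z %/ 2)%Z; lia.
Qed.

Lemma odd_sq (b : int) : ~~ (2 %| b)%Z -> exists t, b ^+ 2 = 8 * t + 1.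
Proof.
move=> hb; have -> : b = 2 * (b %/ 2)%Z + 1 by lia.
case: (par (b %/ 2)%Z) => [[j ->]|[j ->]].
  by exists (j * (2 * j + 1)); ring.
by exists ((2 * j + 1) * (j + 1)); ring.
Qed.

Lemma D8_1 (a b c : int) : ~~ (2 %| b)%Z -> (2 %| a)%Z || (2 %| c)%Z ->
  ((b ^+ 2 - 4 * a * c) %% 8)%Z = 1.
Proof.
move=> /odd_sq [t ->] /orP [] h.
  have -> : a = 2 * (a %/ 2)%Z by lia.
  have -> : 8 * t + 1 - 4 * (2 * (a %/ 2)%Z) * c = 8 * (t - (a %/ 2)%Z * c) + 1 by ring.
  move: (t - _) => u; lia.
have -> : c = 2 * (c %/ 2)%Z by lia.
have -> : 8 * t + 1 - 4 * a * (2 * (c %/ 2)%Z) = 8 * (t - a * (c %/ 2)%Z) + 1 by ring.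
move: (t - _) => u; lia.
Qed.

Lemma D8_5 (a b c : int) : ~~ (2 %| b)%Z -> ~~ (2 %| a)%Z -> ~~ (2 %| c)%Z ->
  ((b ^+ 2 - 4 * a * c) %% 8)%Z = 5.
Proof.
move=> /odd_sq [t ->] ha hc.
have -> : a = 2 * (a %/ 2)%Z + 1 by lia.
have -> : c = 2 * (c %/ 2)%Z + 1 by lia.
move: (a %/ 2)%Z (c %/ 2)%Z => k l.
have -> : 8 * t + 1 - 4 * (2 * k + 1) * (2 * l + 1) = 8 * (t - 2 * k * l - k - l - 1) + 5 by ring.
move: (t - _ - _ - _ - _) => u; lia.
Qed.

Definition Rh (p h : nat) : pred (int * int) := fun w => (p%:Z %| w.1 - h%:Z * w.2)%Z.
Definition R0 (p : nat) : pred (int * int) := fun w => (p%:Z %| w.2)%Z.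
Definition Rb (p : nat) : pred (int * int) := fun w => (p%:Z %| w.1)%Z && (p%:Z %| w.2)%Z.

Lemma single (p : nat) (a b c : int) (n : nat) (R : pred (int * int)) :
  (forall w, Qp a b c n w -> (p%:Z %| n%:Z)%Z = R w) ->
  proj p 0 (theta a b c) n = (count [pred w | Qp a b c n w && R w] (pbox (rep_bound a c n)))%:Z.
Proof.
move=> H; rewrite /proj /theta repE.
have -> : (n %% p == 0)%N = (p%:Z %| n%:Z)%Z by [].
case: ifP => hp; congr (Posz _).
  apply: eq_count => w /=; case Qw: (Qp a b c n w) => //=.
  by rewrite -(H w Qw) hp.
symmetry; apply/eqP; rewrite -leqn0 leqNgt -has_count; apply/hasPn => w _ /=.
by case Qw: (Qp a b c n w) => //=; rewrite -(H w Qw) hp.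
Qed.

Lemma union (p : nat) (a b c : int) (n : nat) (R1 R2 : pred (int * int)) :
  (forall w, Qp a b c n w -> (p%:Z %| n%:Z)%Z = R1 w || R2 w) ->
  (forall w, Qp a b c n w -> R1 w && R2 w = Rb p w) ->
  let s := pbox (rep_bound a c n) in
  proj p 0 (theta a b c) n = (count [pred w | Qp a b c n w && R1 w] s)%:Z
     + (count [pred w | Qp a b c n w && R2 w] s)%:Z
     - (count [pred w | Qp a b c n w && Rb p w] s)%:Z.
Proof.
move=> H1 H2 s; rewrite (@single _ _ _ _ _ [pred w | R1 w || R2 w]) //.
have := count_predUI [pred w | Qp a b c n w && R1 w] [pred w | Qp a b c n w && R2 w] s.
have -> : count (predU [pred w | Qp a b c n w && R1 w] [pred w | Qp a b c n w && R2 w]) s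
   = count [pred w | Qp a b c n w && [pred w0 | R1 w0 || R2 w0] w] s.
  by apply: eq_count => w /=; rewrite andb_orr.
have -> : count (predI [pred w | Qp a b c n w && R1 w] [pred w | Qp a b c n w && R2 w]) s
   = count [pred w | Qp a b c n w && Rb p w] s.
  apply: eq_count => w /=; case Qw: (Qp a b c n w) => //=.
  by rewrite -(H2 w Qw).
move=> e; apply/eqP; rewrite eq_sym subr_eq -!PoszD e; by [].
Qed.

Lemma pnF (p : nat) (a b c : int) (n : nat) (w : int * int) : prime p -> Qp a b c n w ->
  (p%:Z %| n%:Z)%Z = (QF (a%:~R : 'F_p) b%:~R c%:~R w.1%:~R w.2%:~R == 0).
Proof. by move=> pp /eqP <-; rewrite dvdF // qformF. Qed.

Lemma RhF (p h : nat) (w : int * int) : prime p ->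
  Rh p h w = ((w.1%:~R : 'F_p) - (h%:Z)%:~R * w.2%:~R == 0).
Proof. by move=> pp; rewrite /Rh dvdF // rmorphB rmorphM. Qed.

Lemma R0F (p : nat) (w : int * int) : prime p -> R0 p w = ((w.2%:~R : 'F_p) == 0).
Proof. by move=> pp; rewrite /R0 dvdF. Qed.

Lemma RbF (p : nat) (w : int * int) : prime p ->
  Rb p w = ((w.1%:~R : 'F_p) == 0) && ((w.2%:~R : 'F_p) == 0).
Proof. by move=> pp; rewrite /Rb !dvdF. Qed.

Lemma discF (F : fieldType) (a b c : int) :
  ((disc a b c)%:~R : F) = (b%:~R) ^+ 2 - 4 * a%:~R * c%:~R.
Proof. by rewrite /disc !(intrD, intrM, intrN, rmorphXn). Qed.

Lemma FH (p : nat) (a b c : int) (h n : nat) : prime p -> 0 < a -> disc a b c < 0 ->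
  count [pred w | Qp a b c n w && Rh p h w] (pbox (rep_bound a c n)) =
  rep (a * (p%:Z) ^+ 2) (p%:Z * (b + 2 * a * h%:Z)) (a * (h%:Z) ^+ 2 + b * h%:Z + c) n.
Proof.
move=> pp ha hd.
have p0 : 0 < p%:Z by have := prime_gt0 pp; clear; lia.
have hp2 : 0 < p%:Z ^+ 2 by apply: exprn_gt0.
apply: (@rep_bij _ _ _ _ _ _ _ _ _ (fun z => (h%:Z * z.2 + p%:Z * z.1, z.2))) => //.
- by apply: mulr_gt0.
- have -> : disc (a * p%:Z ^+ 2) (p%:Z * (b + 2 * a * h%:Z)) (a * h%:Z ^+ 2 + b * h%:Z + c)
     = p%:Z ^+ 2 * disc a b c by rewrite /disc; ring.
  by rewrite pmulr_rlt0.
- move=> [z y] [z' y'] /= [e1 e2]; subst y'; congr (_, _).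
  apply: (mulfI (x := p%:Z)); first by rewrite gt_eqF.
  by move: e1 => /addrI.
- move=> [z y] /= e; split.
    rewrite /Rh /=.
    have -> : h%:Z * y + p%:Z * z - h%:Z * y = p%:Z * z by ring.
    exact: dvdz_mulr.
  by rewrite -e /qform; ring.
move=> [x y] /= e /dvdzP [k hk]; exists (k, y).
have ex : x = h%:Z * y + k * p%:Z by rewrite -hk; ring.
split; first by rewrite /= ex; congr (_, _); ring.
by rewrite -e /qform /= ex; ring.
Qed.

Lemma F0 (p : nat) (a b c : int) (n : nat) : prime p -> 0 < a -> disc a b c < 0 ->
  count [pred w | Qp a b c n w && R0 p w] (pbox (rep_bound a c n)) =
  rep a (p%:Z * b) (c * p%:Z ^+ 2) n.
Proof.
move=> pp ha hd.
have p0 : 0 < p%:Z by have := prime_gt0 pp; clear; lia.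
have hp2 : 0 < p%:Z ^+ 2 by apply: exprn_gt0.
apply: (@rep_bij _ _ _ _ _ _ _ _ _ (fun z => (z.1, p%:Z * z.2))) => //.
- have -> : disc a (p%:Z * b) (c * p%:Z ^+ 2) = p%:Z ^+ 2 * disc a b c by rewrite /disc; ring.
  by rewrite pmulr_rlt0.
- move=> [z y] [z' y'] /= [e1 e2]; subst z'; congr (_, _).
  by apply: (mulfI (x := p%:Z)) => //; rewrite gt_eqF.
- move=> [z y] /= e; split.
    by rewrite /R0 /= dvdz_mulr.
  by rewrite -e /qform; ring.
move=> [x y] /= e /dvdzP [k /= hk]; exists (x, k).
split; first by rewrite /= hk mulrC.
by rewrite -e /qform /= hk; ring.
Qed.

Lemma PoszX (m k : nat) : Posz (m ^ k)%N = (Posz m) ^+ k.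
Proof. elim: k => [//|k IH]; by rewrite expnS exprS PoszM IH. Qed.

Lemma TP (p : nat) (a b c : int) (n : nat) : prime p -> 0 < a -> disc a b c < 0 ->
  theta_pow (p ^ 2) a b c n =
  (count [pred w | Qp a b c n w && Rb p w] (pbox (rep_bound a c n)))%:Z.
Proof.
move=> pp ha hd.
have p0 : 0 < p%:Z by have := prime_gt0 pp; clear; lia.
rewrite /theta_pow; case: ifP => hdiv.
  congr (Posz _); symmetry.
  have en : n = (n %/ p ^ 2 * p ^ 2)%N by rewrite divnK.
  apply: (@rep_bij _ _ _ _ _ _ _ _ _ (fun z => (p%:Z * z.1, p%:Z * z.2))) => //.
  - move=> [z y] [z' y'] /= [e1 e2]; congr (_, _);
    by apply: (mulfI (x := p%:Z)) => //; rewrite gt_eqF.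
  - move=> [z y] /= e; split.
      by rewrite /Rb /= !dvdz_mulr.
    rewrite en PoszM -e /qform /= PoszX; ring.
  move=> [x y] /= e /andP [/dvdzP [k /= hk] /dvdzP [l /= hl]]; exists (k, l); split.
    by rewrite /= hk hl mulrC [l * _]mulrC.
  apply: (mulfI (x := p%:Z ^+ 2)); first by rewrite expf_neq0 // gt_eqF.
  rewrite -PoszX -PoszM mulnC -en -e /qform /= hk hl; ring.
symmetry; congr (Posz _); apply/eqP; rewrite -leqn0 leqNgt -has_count.
apply/hasPn => -[x y] _ /=; apply/negP => /andP [/eqP e /andP [/dvdzP [k /= hk] /dvdzP [l /= hl]]].
move/negbT: hdiv => /negP; apply.
have : ((p ^ 2)%N%:Z %| n%:Z)%Z.
  rewrite -e /qform /= hk hl PoszX; apply/dvdzP; exists (qform a b c k l).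
  rewrite /qform; ring.
by [].
Qed.

Set Implicit Arguments. Unset Strict Implicit.

Lemma four2 : (4 : 'F_2) = 0. Proof. by apply/eqP. Qed.
Lemma negF2 (x : 'F_2) : - x = x. Proof. by case: (F2c x) => ->; apply/eqP. Qed.

Lemma c2F2 (A B C H X Y : 'F_2) : A != 0 -> B ^+ 2 - 4 * A * C = 0 -> H = C ->
  (QF A B C X Y == 0) = (X - H * Y == 0).
Proof.
move=> /F2ne0 -> hD ->.
have : B ^+ 2 = 0 by rewrite -hD four2; ring.
move/eqP; rewrite expf_eq0 /= => /eqP ->.
by case: (F2c X) => ->; case: (F2c Y) => ->; case: (F2c C) => ->.
Qed.

Lemma c3F2 (X Y : 'F_2) : (QF 1 1 1 X Y == 0) = (X == 0) && (Y == 0).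
Proof. by case: (F2c X) => ->; case: (F2c Y) => ->. Qed.

Lemma c5F2 (H4 X Y : 'F_2) : H4 != 0 ->
  (QF 1 1 0 X Y == 0) = (X - 0 * Y == 0) || (X - H4 * Y == 0).
Proof. by move=> /F2ne0 ->; case: (F2c X) => ->; case: (F2c Y) => ->. Qed.

Lemma c5F2i (H4 X Y : 'F_2) : H4 != 0 ->
  (X - 0 * Y == 0) && (X - H4 * Y == 0) = (X == 0) && (Y == 0).
Proof. by move=> /F2ne0 ->; case: (F2c X) => ->; case: (F2c Y) => ->. Qed.

Lemma congF (p : nat) (x y : int) : prime p -> congz p x y -> (x%:~R : 'F_p) = y%:~R.
Proof. by move=> pp; rewrite /congz dvdF // rmorphB subr_eq0 => /eqP. Qed.

Lemma ncongF (p : nat) (x y : int) : prime p -> ~ congz p x y -> (x%:~R : 'F_p) != y%:~R.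
Proof. by move=> pp; rewrite /congz dvdF // rmorphB subr_eq0 => /negP. Qed.

Lemma two_ne0 (p : nat) : prime p -> p != 2%N -> (2 : 'F_p) != 0.
Proof.
move=> pp p2; rewrite -(dvdn_pcharf (pchar_Fp pp)); apply/negP => h.
have := dvdn_leq (isT : (0 < 2)%N) h; have := prime_gt1 pp.
move: p2; clear; lia.
Qed.

Lemma int2F (F : fieldType) : ((2 : int)%:~R : F) = 2. Proof. by []. Qed.

Lemma nz_of_kron (D : int) (p : nat) : kron D p != 0 -> ~~ (p%:Z %| D)%Z.
Proof. by move=> h; apply/negP => /kronP0 e; rewrite e eqxx in h. Qed.

Lemma B_ne0_2 (a b c : int) : ~~ (2%:Z %| disc a b c)%Z -> ((b%:~R : 'F_2) != 0).
Proof.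
move=> h; apply/negP => /eqP hb; move: h.
have e : ((disc a b c)%:~R : 'F_2) = 0 by rewrite discF hb four2; ring.
by rewrite dvdF // e eqxx.
Qed.

Lemma im2 (F : fieldType) (a h : int) : ((2 * a * h)%:~R : F) = 2 * a%:~R * h%:~R.
Proof. by rewrite !intrM int2F. Qed.

Lemma imNp (F : fieldType) (b s : int) : ((- b + s)%:~R : F) = - b%:~R + s%:~R.
Proof. by rewrite intrD intrN. Qed.

Lemma imNm (F : fieldType) (b s : int) : ((- b - s)%:~R : F) = - b%:~R - s%:~R.
Proof. by rewrite intrD !intrN. Qed.

Unset Implicit Arguments.

Lemma case1 (p : nat) (a b c : int) :
  prime p -> 0 < a -> disc a b c < 0 -> primitive_form a b c ->
  (p%:Z %| a)%Z -> kron (disc a b c) p = 0 ->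
  forall n : nat, proj p 0 (theta a b c) n = theta a (b * p%:Z) (c * p%:Z ^+ 2) n.
Proof.
move=> pp ha hd hprim hpa hk n.
rewrite (@single _ _ _ _ _ (R0 p)); last first.
  move=> w Qw; rewrite (@pnF p a b c n w pp Qw) R0F //.
  have hA : (a%:~R : 'F_p) = 0 by apply/eqP; rewrite -dvdF.
  have hD : (b%:~R : 'F_p) ^+ 2 - 4 * a%:~R * c%:~R = 0.
    by rewrite -discF; apply/eqP; rewrite -dvdF //; exact: kron0.
  apply: c1F => //.
  have hB : (b%:~R : 'F_p) = 0.
    have : (b%:~R : 'F_p) ^+ 2 = 0 by rewrite -hD hA; ring.
    by move/eqP; rewrite expf_eq0 /= => /eqP.
  rewrite -dvdF //; apply/negP => hc.
  have : (p%:Z %| gcdz (gcdz a b) c)%Z by rewrite !dvdz_gcd hpa hc dvdF // hB eqxx.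
  rewrite hprim dvdzE /= dvdn1 => /eqP p1.
  by move: pp; rewrite p1.
by rewrite F0 // /theta [b * _]mulrC.
Qed.

Lemma case2 (p : nat) (a b c : int) :
  prime p -> 0 < a -> disc a b c < 0 ->
  ~~ (p%:Z %| a)%Z -> kron (disc a b c) p = 0 ->
  forall h1 : nat, (h1 < p)%N -> hcond1 p a b c h1 ->
  forall n : nat, proj p 0 (theta a b c) n = ftheta p a b c h1 n.
Proof.
move=> pp ha hd hpa hk h1 _ hc1 n.
rewrite (@single _ _ _ _ _ (Rh p h1)); last first.
  move=> w Qw; rewrite (@pnF p a b c n w pp Qw) RhF //.
  have hA : (a%:~R : 'F_p) != 0 by rewrite -dvdF.
  have hD : (b%:~R : 'F_p) ^+ 2 - 4 * a%:~R * c%:~R = 0.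
    by rewrite -discF; apply/eqP; rewrite -dvdF //; exact: kron0.
  rewrite /hcond1 in hc1; case: eqP hc1 => [p2|/eqP p2] hc1.
    subst p; apply: c2F2 => //; exact: congF.
  apply: c2F => //; first exact: two_ne0.
  by have := congF pp hc1; rewrite !(rmorphM, rmorphN) ?rmorph_nat ?int2F.
by rewrite FH.
Qed.

Lemma case3 (p : nat) (a b c : int) :
  prime p -> 0 < a -> disc a b c < 0 ->
  kron (disc a b c) p = -1 ->
  forall n : nat, proj p 0 (theta a b c) n = theta_pow (p ^ 2) a b c n.
Proof.
move=> pp ha hd hk n.
rewrite (@single _ _ _ _ _ (Rb p)); last first.
  move=> w Qw; rewrite (@pnF p a b c n w pp Qw) RbF //.
  case: (eqVneq p 2%N) => [p2|p2].
    subst p; move: hk; rewrite kron2; case: ifP => // hD2; case: ifP => // h8 _.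
    have hb := B_ne0_2 (negbT hD2).
    have hb' : ~~ (2%:Z %| b)%Z by rewrite dvdF.
    have ha' : ~~ (2%:Z %| a)%Z.
      by apply/negP => h; move: h8; rewrite /disc D8_1 // h.
    have hc' : ~~ (2%:Z %| c)%Z.
      by apply/negP => h; move: h8; rewrite /disc D8_1 // h orbT.
    rewrite dvdF // in ha'; rewrite dvdF // in hc'.
    by rewrite (F2ne0 hb) (F2ne0 ha') (F2ne0 hc') c3F2.
  apply: c3F => //; first exact: two_ne0.
  by move=> Z; rewrite -discF; exact: kronodd.
by rewrite TP.
Qed.

Lemma case4 (p : nat) (a b c : int) :
  prime p -> 0 < a -> disc a b c < 0 ->
  (p%:Z %| a)%Z -> kron (disc a b c) p = 1 ->
  forall h2 : nat, (h2 < p)%N -> hcond2 p a b c h2 ->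
  forall n : nat, proj p 0 (theta a b c) n =
    ftheta p a b c h2 n + theta a (p%:Z * b) (c * p%:Z ^+ 2) n
    - theta_pow (p ^ 2) a b c n.
Proof.
move=> pp ha hd hpa hk h2 _ hc2 n.
have hA : (a%:~R : 'F_p) = 0 by apply/eqP; rewrite -dvdF.
have hD : ~~ (p%:Z %| disc a b c)%Z by apply: nz_of_kron; rewrite hk.
have hB : (b%:~R : 'F_p) != 0.
  apply/negP => /eqP hb; move: hD; rewrite dvdF // discF hA hb.
  by rewrite expr0n /= !mulr0 mul0r subr0 eqxx.
have hBH : (b%:~R : 'F_p) * (h2%:Z)%:~R = - c%:~R.
  rewrite /hcond2 in hc2; case: eqP hc2 hB => [p2|/eqP p2] hc2 hB.
    subst p; rewrite (F2ne0 hB) mul1r negF2; exact: congF.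
  by have := congF pp hc2; rewrite !(rmorphM, rmorphN).
rewrite (@union _ _ _ _ _ (R0 p) (Rh p h2)).
- by rewrite F0 // FH // -TP // /ftheta /theta; congr (_ - _); exact: addrC.
- by move=> w Qw; rewrite (@pnF p a b c n w pp Qw) R0F // RhF //; apply: c4F.
by move=> w _; rewrite R0F // RhF // RbF // c4Fi.
Qed.

Lemma case5 (p : nat) (a b c : int) :
  prime p -> 0 < a -> disc a b c < 0 ->
  ~~ (p%:Z %| a)%Z -> kron (disc a b c) p = 1 ->
  forall s : int, congz p (s ^+ 2) (disc a b c) ->
  forall h3 h4 : nat, (h3 < p)%N -> (h4 < p)%N ->
  hcond3 p a b c s h3 -> hcond4 p a b c s h3 h4 ->
  forall n : nat, proj p 0 (theta a b c) n =
    ftheta p a b c h3 n + ftheta p a b c h4 n - theta_pow (p ^ 2) a b c n.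
Proof.
move=> pp ha hd hpa hk s hs h3 h4 _ _ hc3 hc4 n.
have hA : (a%:~R : 'F_p) != 0 by rewrite -dvdF.
have hD : ~~ (p%:Z %| disc a b c)%Z by apply: nz_of_kron; rewrite hk.
rewrite (@union _ _ _ _ _ (Rh p h3) (Rh p h4)); first by rewrite !FH // -TP.
- move=> w Qw; rewrite (@pnF p a b c n w pp Qw) !RhF //.
  rewrite /hcond3 /hcond4 in hc3 hc4; case: eqP hc3 hc4 hA => [p2|/eqP p2] hc3 hc4 hA.
    subst p; move: hk; rewrite kron2; case: ifP => // hD2; case: ifP => // h8 _.
    have hb := B_ne0_2 (negbT hD2).
    have hb' : ~~ (2%:Z %| b)%Z by rewrite dvdF.
    have ha' : ~~ (2%:Z %| a)%Z by rewrite dvdF.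
    have hc' : (2%:Z %| c)%Z.
      by apply: contraTT h8 => hc; rewrite /disc D8_5.
    rewrite dvdF // in hc'.
    have e3 := congF (isT : prime 2) hc3.
    have e4 := ncongF (isT : prime 2) hc4.
    rewrite (eqP hc') in e3; rewrite e3 in e4.
    by rewrite (F2ne0 hb) (F2ne0 hA) (eqP hc') e3; apply: c5F2.
  have e3 := congF pp hc3; have e4 := congF pp hc4.
  rewrite im2 imNp in e3; rewrite im2 imNm in e4.
  apply: (@c5F _ _ _ _ (s%:~R)) => //; first exact: two_ne0.
  by rewrite -discF -(congF pp hs) rmorphXn.
move=> w Qw; rewrite !RhF // RbF //.
rewrite /hcond3 /hcond4 in hc3 hc4; case: eqP hc3 hc4 hA => [p2|/eqP p2] hc3 hc4 hA.
  subst p; move: hk; rewrite kron2; case: ifP => // hD2; case: ifP => // h8 _.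
  have ha' : ~~ (2%:Z %| a)%Z by rewrite dvdF.
  have hb' : ~~ (2%:Z %| b)%Z by rewrite dvdF //; exact: B_ne0_2 (negbT hD2).
  have hc' : (2%:Z %| c)%Z.
    by apply: contraTT h8 => hc; rewrite /disc D8_5.
  rewrite dvdF // in hc'.
  have e3 := congF (isT : prime 2) hc3.
  have e4 := ncongF (isT : prime 2) hc4.
  rewrite (eqP hc') in e3; rewrite e3 in e4.
  by rewrite e3; apply: c5F2i.
have e3 := congF pp hc3; have e4 := congF pp hc4.
rewrite im2 imNp in e3; rewrite im2 imNm in e4.
have hs0 : (s%:~R : 'F_p) != 0.
  apply: contraNneq hD => hs0; rewrite dvdF // -(congF pp hs).
  by rewrite (_ : ((s ^+ 2)%:~R : 'F_p) = (s%:~R) ^+ 2) ?rmorphXn // hs0 expr0n.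
exact: (@c5Fi _ _ _ (c%:~R) (s%:~R) _ _ _ _ (two_ne0 pp p2) hA hs0 e3 e4).
Qed.

Theorem lemma4p2 (p : nat) (a b c : int) :
  prime p -> 0 < a -> disc a b c < 0 -> primitive_form a b c ->
  [/\ (p%:Z %| a)%Z -> kron (disc a b c) p = 0 ->
        forall n : nat, proj p 0 (theta a b c) n = theta a (b * p%:Z) (c * p%:Z ^+ 2) n,
      ~~ (p%:Z %| a)%Z -> kron (disc a b c) p = 0 ->
        forall h1 : nat, (h1 < p)%N -> hcond1 p a b c h1 ->
        forall n : nat, proj p 0 (theta a b c) n = ftheta p a b c h1 n,
      kron (disc a b c) p = -1 ->
        forall n : nat, proj p 0 (theta a b c) n = theta_pow (p ^ 2) a b c n,
      (p%:Z %| a)%Z -> kron (disc a b c) p = 1 ->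
        forall h2 : nat, (h2 < p)%N -> hcond2 p a b c h2 ->
        forall n : nat, proj p 0 (theta a b c) n =
          ftheta p a b c h2 n + theta a (p%:Z * b) (c * p%:Z ^+ 2) n
          - theta_pow (p ^ 2) a b c n
    & ~~ (p%:Z %| a)%Z -> kron (disc a b c) p = 1 ->
        forall s : int, congz p (s ^+ 2) (disc a b c) ->
        forall h3 h4 : nat, (h3 < p)%N -> (h4 < p)%N ->
        hcond3 p a b c s h3 -> hcond4 p a b c s h3 h4 ->
        forall n : nat, proj p 0 (theta a b c) n =
          ftheta p a b c h3 n + ftheta p a b c h4 n - theta_pow (p ^ 2) a b c n].
Proof.
move=> pp ha hd hprim; split.
- exact: case1.
- exact: case2.
- exact: case3.
- exact: case4.
- exact: case5.
Qed.
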